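(* Let $\mathcal{P}$ be a Yao-Yao partition of $\mathbb{R}^n$ whose center is $0$. Then $\mathcal{P}^*:=\{A^* : A\in\mathcal{P}\}$ is also a partition of $\mathbb{R}^n$, where for a set $C\subseteq\mathbb{R}^n$, $C^*=\{y\in\mathbb{R}^n : x\cdot y\geq 0 \text{ for all } x\in C\}$.
   Context: $x\cdot y$ is the standard scalar product on $\mathbb{R}^n$. A set $\mathcal{P}$ of subsets of an affine space $E$ is a partition of $E$ if $\bigcup\mathcal{P}=E$ and the interiors of two distinct elements of $\mathcal{P}$ do not intersect. Yao-Yao partitions and their centers are defined by induction on the dimension of a finite-dimensional real affine space $E$ (with associated vector space $\vec{E}$): if $E=\{c\}$ has dimension $0$, then $\{\{c\}\}$ is a Yao-Yao partition of $E$ with center $c$. If $E$ has dimension $n\geq 1$, $\mathcal{P}$ is a Yao-Yao partition of $E$ if there exist an affine hyperplane $F$ of $E$, a vector $v\in\vec{E}\setminus\vec{F}$, and two Yao-Yao partitions $\mathcal{P}_+$, $\mathcal{P}_-$ of $F$ having the same center $c$, such that $\mathcal{P}=\{A+\mathbb{R}_- v : A\in\mathcal{P}_-\}\cup\{A+\mathbb{R}_+ v : A\in\mathcal{P}_+\}$; the center of $\mathcal{P}$ is then $c$. *)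

(* Defs.v *)
From HB Require Import structures.
From mathcomp Require Import all_boot all_order all_algebra.
From mathcomp Require Import all_classical all_reals all_analysis.
Set Implicit Arguments. Unset Strict Implicit. Unset Printing Implicit Defensive.
Import Order.TTheory GRing.Theory Num.Theory.
Import numFieldNormedType.Exports.
Local Open Scope classical_set_scope.
Local Open Scope ring_scope.

Section YaoYao.
Variables (R : realType) (n : nat).
Notation vec := 'rV[R]_n.

Definition dotp (x y : vec) : R := \sum_(i < n) x 0 i * y 0 i.

Definition dual_cone (C : set vec) : set vec :=
  [set y | forall x, C x -> 0 <= dotp x y].

Definition is_partition (E : set vec) (P : set (set vec)) : Prop :=
  \bigcup_(A in P) A = E /\
  forall A B, P A -> P B -> A <> B -> interior A `&` interior B = set0.

Definition aff (c0 : vec) (V : 'M[R]_n) : set vec :=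
  [set c0 + u | u in [set u : vec | (u <= V)%MS]].

Definition ray_neg (A : set vec) (v : vec) : set vec :=
  [set a + t *: v | a in A & t in [set t : R | t <= 0]].
Definition ray_pos (A : set vec) (v : vec) : set vec :=
  [set a + t *: v | a in A & t in [set t : R | 0 <= t]].

(* YY E P c : P is a Yao-Yao partition of the affine subspace E of R^n with
   center c (inductive definition on the dimension of E) *)
Inductive YY : set vec -> set (set vec) -> vec -> Prop :=
| YY0 (c : vec) : YY [set c] [set [set c]] c
| YYS (c0 : vec) (V : 'M[R]_n) (w : vec) (W : 'M[R]_n) (v : vec)
      (Pm Pp : set (set vec)) (c : vec) :
    (0 < \rank V)%N ->
    (W <= V)%MS -> \rank W = (\rank V).-1 ->     (* F = aff w W hyperplane of E *)
    (w - c0 <= V)%MS ->                          (* F is contained in E *)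
    (v <= V)%MS -> ~~ (v <= W)%MS ->             (* v in vec E \ vec F *)
    YY (aff w W) Pm c -> YY (aff w W) Pp c ->
    YY (aff c0 V)
       ([set B | exists2 A, Pm A & B = ray_neg A v] `|`
        [set B | exists2 A, Pp A & B = ray_pos A v]) c.

End YaoYao.

(* Main.v *)
Require Import Defs.
From HB Require Import structures.
From mathcomp Require Import all_boot all_order all_algebra.
From mathcomp Require Import all_classical all_reals all_analysis.
From mathcomp Require Import ring lra.
Local Open Scope classical_set_scope.
Local Open Scope ring_scope.
Import Order.TTheory GRing.Theory Num.Theory.
Import numFieldNormedType.Exports.

Section Aux.
Variables (R : realType) (n : nat).
Local Notation vec := 'rV[R]_n.

Lemma dotpC (x y : vec) : dotp x y = dotp y x.
Proof. by rewrite /dotp; apply: eq_bigr => i _; rewrite mulrC. Qed.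

Lemma dotpDZ (a v y : vec) t : dotp (a + t *: v) y = dotp a y + t * dotp v y.
Proof.
rewrite /dotp mulr_sumr -big_split; apply: eq_bigr => i _.
by rewrite !mxE mulrDl mulrA.
Qed.

Lemma dotp_gt0 (v : vec) : v != 0 -> 0 < dotp v v.
Proof.
move=> v0; rewrite lt_def; apply/andP; split; last first.
  by apply: sumr_ge0 => i _; rewrite -expr2 sqr_ge0.
apply: contra v0 => /eqP H; apply/eqP/rowP => i.
have := psumr_eq0P (fun i _ => (eq_ind _ (fun z => 0 <= z) (sqr_ge0 (v 0 i)) _ (expr2 _))) H.
move=> /(_ i isT) /eqP; rewrite mulf_eq0 orbb => /eqP ->.
by rewrite mxE.
Qed.

Lemma dual_pos (A : set vec) v y : A 0 ->
  dual_cone (ray_pos A v) y -> dual_cone A y /\ 0 <= dotp v y.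
Proof.
move=> A0 H; split.
  move=> a Aa; apply: H; exists a => //; exists 0 => //=; by rewrite scale0r addr0.
apply: H; exists 0 => //; exists 1 => //=; by rewrite scale1r add0r.
Qed.

Lemma dotp0l (y : vec) : dotp 0 y = 0.
Proof. by rewrite /dotp big1 // => i _; rewrite mxE mul0r. Qed.

Lemma dual_neg (A : set vec) v y : A 0 ->
  dual_cone (ray_neg A v) y -> dual_cone A y /\ dotp v y <= 0.
Proof.
move=> A0 H; split.
  move=> a Aa; apply: H; exists a => //; exists 0 => //=; by rewrite scale0r addr0.
have : 0 <= dotp (0 + (-1) *: v) y.
  by apply: H; exists 0 => //; exists (-1) => //=; rewrite lerN10.
by rewrite dotpDZ dotp0l add0r mulN1r oppr_ge0.
Qed.

Lemma pos_dual (A : set vec) v y :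
  dual_cone A y -> 0 <= dotp v y -> dual_cone (ray_pos A v) y.
Proof.
move=> HA Hv z [a Aa [t /= t0 <-]]; rewrite dotpDZ.
by apply: addr_ge0; [exact: HA | exact: mulr_ge0].
Qed.

Lemma neg_dual (A : set vec) v y :
  dual_cone A y -> dotp v y <= 0 -> dual_cone (ray_neg A v) y.
Proof.
move=> HA Hv z [a Aa [t /= t0 <-]]; rewrite dotpDZ.
by apply: addr_ge0; [exact: HA | exact: mulr_le0].
Qed.

Lemma half_interior (S T : set vec) v y : v != 0 ->
  (forall z, S z -> 0 <= dotp v z) -> (forall z, T z -> dotp v z <= 0) ->
  interior S y -> T y -> False.
Proof.
move=> v0 HS HT /nbhs_ballP [e e0 He] Ty.
have nv : 0 < `|v| by rewrite normr_gt0.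
set t := e / (`|v| * 2).
have t0 : 0 < t by rewrite /t divr_gt0 // mulr_gt0.
have : S (y + (- t) *: v).
  apply: He; rewrite -ball_normE /ball_ /= opprD addrA subrr add0r normrN normrZ.
  rewrite normrN gtr0_norm //.
  have -> : t * `|v| = e / 2.
    rewrite /t; field; by rewrite gt_eqF.
  by rewrite ltr_pdivrMr // ltr_pMr // ltr1n.
move=> /HS; rewrite dotpC dotpDZ dotpC.
have := HT _ Ty; have := dotp_gt0 v v0.
move=> h1 h2 h3.
have : 0 < t * dotp v v by rewrite mulr_gt0.
rewrite mulNr in h3; move: h2 h3; set a := dotp v y; set b := t * dotp v v.
move=> h2 h3 h4.
have : b <= a by rewrite -subr_ge0.
move=> h5; have := lt_le_trans h4 h5; rewrite ltNge h2 //.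
Qed.

End Aux.
Arguments dual_pos {R n A v y}.
Arguments dual_neg {R n A v y}.
Arguments pos_dual {R n A v y}.
Arguments neg_dual {R n A v y}.
Arguments half_interior {R n S T v y}.
Arguments dotp0l {R n}.

Lemma YY_main (R : realType) (n : nat) E P (cc : 'rV[R]_n) : YY E P cc ->
  (forall A, P A -> A cc) /\
  (cc = 0 -> (forall y, exists2 A, P A & dual_cone A y) /\
   (forall A B, P A -> P B -> A <> B ->
      interior (dual_cone A) `&` interior (dual_cone B) = set0)).
Proof.
elim=> [c | c0 V w W v Pm Pp c _ _ _ _ _ nvW _ [Hm0 IHm] _ [Hp0 IHp]].
  split; first by move=> A ->.
  move=> ->; split.
    by move=> y; exists [set 0] => // x ->; rewrite dotp0l.
  by move=> A B -> -> [].
have v0 : v != 0 by apply: contraNneq nvW => ->; exact: sub0mx.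
split.
  move=> B [[A HA ->]|[A HA ->]]; exists c;
    [exact: Hm0 | | exact: Hp0 |]; by exists 0 => //=; rewrite scale0r addr0.
move=> c0'; case: (IHm c0') => Cm Dm; case: (IHp c0') => Cp Dp; subst c.
split.
  move=> y; case: (leP 0 (dotp v y)) => h.
    have [A HA dA] := Cp y; exists (ray_pos A v); first by right; exists A.
    exact: pos_dual.
  have [A HA dA] := Cm y; exists (ray_neg A v); first by left; exists A.
  by apply: neg_dual => //; exact: ltW.
move=> B1 B2 [[A1 H1 ->]|[A1 H1 ->]] [[A2 H2 ->]|[A2 H2 ->]] neq;
  apply/seteqP; split => // y [i1 i2].
- have neqA : A1 <> A2 by move=> e; apply: neq; rewrite e.
  have : (interior (dual_cone A1) `&` interior (dual_cone A2)) y.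
    split.
      by apply: (interiorS _ i1) => z h; exact: (proj1 (dual_neg (Hm0 _ H1) h)).
    by apply: (interiorS _ i2) => z h; exact: (proj1 (dual_neg (Hm0 _ H2) h)).
  by rewrite Dm.
- exfalso; apply: (half_interior v0 _ _ i2 (interior_subset i1)).
    by move=> z h; exact: (proj2 (dual_pos (Hp0 _ H2) h)).
  by move=> z h; exact: (proj2 (dual_neg (Hm0 _ H1) h)).
- exfalso; apply: (half_interior v0 _ _ i1 (interior_subset i2)).
    by move=> z h; exact: (proj2 (dual_pos (Hp0 _ H1) h)).
  by move=> z h; exact: (proj2 (dual_neg (Hm0 _ H2) h)).
- have neqA : A1 <> A2 by move=> e; apply: neq; rewrite e.
  have : (interior (dual_cone A1) `&` interior (dual_cone A2)) y.
    split.
      by apply: (interiorS _ i1) => z h; exact: (proj1 (dual_pos (Hp0 _ H1) h)).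
    by apply: (interiorS _ i2) => z h; exact: (proj1 (dual_pos (Hp0 _ H2) h)).
  by rewrite Dp.
Qed.

Theorem mainTheorem2 (R : realType) (n : nat) (P : set (set 'rV[R]_n)) :
  YY [set: 'rV[R]_n] P 0 ->
  is_partition [set: 'rV[R]_n] [set dual_cone C | C in P].
Proof.
move=> /YY_main [_ /(_ erefl) [C D]]; split.
  apply/seteqP; split => // y _.
  have [A HA dA] := C y; exists (dual_cone A) => //; by exists A.
move=> _ _ [A1 H1 <-] [A2 H2 <-] neq.
by apply: D => // e; apply: neq; rewrite e.
Qed.
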